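(* Let $\Omega_n=\dfrac{\pi^{n/2}}{\Gamma\left(\frac n2+1\right)}$ for $n\in\mathbb{N}$. Define, for $n\in\mathbb{N}$, \[ \mu(n)=\frac{1}{6n^{2}}-\frac{1}{45n^{4}}+\frac{8}{315n^{6}}-\frac{8}{105n^{8}},\qquad \lambda(n)=\mu(n)+\frac{1}{128n^{10}}, \] \[ \alpha(n)=-\frac{n+1}{2n}\ln\frac{n}{2}+\frac12\ln(\pi e)-\frac{\ln 2\pi}{2n}-\lambda(n),\qquad \beta(n)=-\frac{n+1}{2n}\ln\frac{n}{2}+\frac12\ln(\pi e)-\frac{\ln 2\pi}{2n}-\mu(n). \] Then $\alpha(n)-\beta(n+1)>0$ for every $n\in\mathbb{N}$. In consequence, the sequence $\left\{\Omega_n^{1/n}\right\}_{n\ge1}$ decreases monotonically (to $0$).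
   Context: $\Omega_n$ is the volume of the unit ball in $\mathbb{R}^n$; $\Gamma$ is Euler's gamma function. The functions $\alpha,\beta$ satisfy $\alpha(n)<\frac1n\ln\Omega_n<\beta(n)$ for all $n\in\mathbb{N}$ (a previously known result). *)

(* Defs.v *)
From Stdlib Require Import Reals.
From Coquelicot Require Import Coquelicot.
Open Scope R_scope.

Definition Gamma (x : R) : R :=
  RInt_gen (fun t => Rpower t (x - 1) * exp (- t)) (at_right 0) (Rbar_locally p_infty).

(* Volume of the unit ball in R^n. *)
Definition Omega (n : nat) : R := Rpower PI (INR n / 2) / Gamma (INR n / 2 + 1).

Definition mu (n : nat) : R :=
  let x := INR n in
  1 / (6 * x ^ 2) - 1 / (45 * x ^ 4) + 8 / (315 * x ^ 6) - 8 / (105 * x ^ 8).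

Definition lambda (n : nat) : R := mu n + 1 / (128 * INR n ^ 10).

Definition alpha (n : nat) : R :=
  let x := INR n in
  - (x + 1) / (2 * x) * ln (x / 2) + 1 / 2 * ln (PI * exp 1)
  - ln (2 * PI) / (2 * x) - lambda n.

Definition beta (n : nat) : R :=
  let x := INR n in
  - (x + 1) / (2 * x) * ln (x / 2) + 1 / 2 * ln (PI * exp 1)
  - ln (2 * PI) / (2 * x) - mu n.

(* Main.v *)
Require Import Defs.
From Stdlib Require Import Reals Lra Lia Classical.
From Coquelicot Require Import Coquelicot.
Open Scope R_scope.


Lemma exR (f : R -> R) a b : (forall t, 0 < t -> continuous f t) -> 0 < a -> 0 < b -> ex_RInt f a b.
Proof.
  intros hc ha hb. apply (ex_RInt_continuous (V:=R_CompleteNormedModule)). intros z [hz _]. apply hc.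
  apply Rlt_le_trans with (2 := hz). apply Rmin_glb_lt; auto.
Qed.

Lemma exp_le_exp (x y : R) : x <= y -> exp x <= exp y.
Proof. intros [h|h]. left; apply exp_increasing; auto. subst; lra. Qed.

Lemma ln_le_sub1 x : 0 < x -> ln x <= x - 1.
Proof. intros hx. generalize (exp_ineq1_le (ln x)). rewrite exp_ln; lra. Qed.

Lemma cont_R (f : R -> R) x : ex_derive f x -> continuous f x.
Proof. intro H. apply (ex_derive_continuous (K:=R_AbsRing) (V:=R_NormedModule) f x H). Qed.

Lemma int_exp (K x y : R) : is_RInt (fun t => K * exp (- t / 2)) x y (2 * K * exp (- x / 2) - 2 * K * exp (- y / 2)).
Proof.
  replace (2 * K * exp (- x / 2) - 2 * K * exp (- y / 2)) with
    (minus ((fun t => -2 * K * exp (- t / 2)) y) ((fun t => -2 * K * exp (- t / 2)) x)).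
  2: { unfold minus, plus, opp; simpl; ring. }
  apply (is_RInt_derive (V:=R_CompleteNormedModule) (fun t => -2 * K * exp (- t / 2)) (fun t => K * exp (- t / 2))).
  - intros t _. auto_derive; auto. unfold Rdiv; field.
  - intros t _. apply cont_R. auto_derive. auto.
Qed.

Lemma int_bound (f : R -> R) K x y : (forall t, 0 < t -> continuous f t) ->
  (forall t, 0 < t -> 0 <= f t) ->
  (forall t, 0 < t -> f t <= K * exp (- t / 2)) -> 0 < x <= y -> RInt f x y <= 2 * K.
Proof.
  intros hc hp hb [hx hxy].
  assert (hK : 0 <= K).
  { assert (h1 := hb 1 Rlt_0_1). assert (h2 : 0 <= f 1) by (apply hp; lra).
    set (e := exp _) in h1. assert (0 < e) by apply exp_pos. nra. }
  apply Rle_trans with (RInt (fun t => K * exp (- t / 2)) x y).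
  - apply RInt_le; auto. apply exR; auto; lra. eexists; apply int_exp.
    intros t ht. apply hb. lra.
  - rewrite (is_RInt_unique _ _ _ _ (int_exp K x y)).
    assert (0 < exp (- y / 2)) by apply exp_pos.
    assert (exp (- x / 2) <= 1). { rewrite <- exp_0. apply exp_le_exp. lra. }
    nra.
Qed.


Notation FP := (filter_prod (at_right 0) (Rbar_locally p_infty)).

Lemma FP_ex (P : R * R -> Prop) : FP P -> exists ab, P ab.
Proof.
  intros [Q S [d Hd] [M HM] HQS].
  exists (d/2, Rmax M 0 + 1). apply HQS.
  - apply Hd. unfold ball; simpl; unfold AbsRing_ball, abs, minus, plus, opp; simpl.
    destruct d as [d dp]; simpl. rewrite Ropp_0, Rplus_0_r, Rabs_pos_eq; lra.
    destruct d as [d dp]; simpl; lra.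
  - apply HM. generalize (Rmax_l M 0); lra.
Qed.

Lemma FP_mk (Q S : R -> Prop) (x0 M : R) : 0 < x0 -> (forall x, 0 < x < x0 -> Q x) ->
  (forall y, M < y -> S y) -> FP (fun ab => Q (fst ab) /\ S (snd ab)).
Proof.
  intros hx hQ hS. apply (Filter_prod _ _ _ Q S).
  - exists (mkposreal x0 hx). intros y hy py. apply hQ. split; auto.
    unfold ball in hy; simpl in hy; unfold AbsRing_ball, abs, minus, plus, opp in hy; simpl in hy.
    rewrite Ropp_0, Rplus_0_r, Rabs_pos_eq in hy; lra.
  - exists M. auto.
  - simpl; auto.
Qed.

Lemma ball_R (l e y : R) : Rabs (y - l) < e -> forall he : 0 < e, ball l (mkposreal e he) y.
Proof. intros h he. unfold ball; simpl; unfold AbsRing_ball, abs, minus, plus, opp; simpl. exact h. Qed.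

Lemma ball_R' (l : R) (e : posreal) y : ball l e y -> Rabs (y - l) < e.
Proof. unfold ball; simpl; unfold AbsRing_ball, abs, minus, plus, opp; simpl. auto. Qed.

Lemma mk_gen (f : R -> R) (If : R * R -> R) l :
  FP (fun ab => is_RInt f (fst ab) (snd ab) (If ab)) ->
  filterlim If FP (locally l) ->
  is_RInt_gen f (at_right 0) (Rbar_locally p_infty) l.
Proof.
  intros H1 H2 P HP. unfold filtermapi.
  apply (filter_imp (fun ab => is_RInt f (fst ab) (snd ab) (If ab) /\ P (If ab))).
  - intros ab [h1 h2]. exists (If ab); split; auto.
  - apply filter_and; auto. apply H2; auto.
Qed.

Lemma gen_ge (f : R -> R) L v :
  is_RInt_gen f (at_right 0) (Rbar_locally p_infty) L ->
  FP (fun ab => forall I, is_RInt f (fst ab) (snd ab) I -> v <= I) -> v <= L.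
Proof.
  intros H H2. destruct (Rle_lt_dec v L) as [h|h]; auto. exfalso.
  assert (he : 0 < (v - L)/2) by lra.
  assert (Hb := H (ball L (mkposreal _ he)) (locally_ball _ _)).
  assert (Hb' : FP (fun ab => exists y, is_RInt f (fst ab) (snd ab) y /\ ball L (mkposreal _ he) y)) by exact Hb.
  destruct (FP_ex _ (filter_and _ _ Hb' H2)) as [ab [[I [h1 h2]] h3]].
  apply ball_R' in h2. simpl in h2. specialize (h3 I h1).
  apply Rabs_def2 in h2. lra.
Qed.

Lemma gen_le (f : R -> R) L v :
  is_RInt_gen f (at_right 0) (Rbar_locally p_infty) L ->
  FP (fun ab => forall I, is_RInt f (fst ab) (snd ab) I -> I <= v) -> L <= v.
Proof.
  intros H H2. destruct (Rle_lt_dec L v) as [h|h]; auto. exfalso.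
  assert (he : 0 < (L - v)/2) by lra.
  assert (Hb := H (ball L (mkposreal _ he)) (locally_ball _ _)).
  assert (Hb' : FP (fun ab => exists y, is_RInt f (fst ab) (snd ab) y /\ ball L (mkposreal _ he) y)) by exact Hb.
  destruct (FP_ex _ (filter_and _ _ Hb' H2)) as [ab [[I [h1 h2]] h3]].
  apply ball_R' in h2. simpl in h2. specialize (h3 I h1).
  apply Rabs_def2 in h2. lra.
Qed.

Lemma lub_approx (E : R -> Prop) m e : is_lub E m -> 0 < e -> exists z, E z /\ m - e < z.
Proof.
  intros [h1 h2] he. destruct (classic (exists z, E z /\ m - e < z)) as [h|h]; auto.
  exfalso. assert (m <= m - e); [|lra]. apply h2. intros z hz.
  destruct (Rle_lt_dec z (m - e)); auto. exfalso; apply h; eauto.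
Qed.

Definition RI (f : R -> R) (a b : R) : R := RInt f a b.

Lemma Chas_R (f : R -> R) a b c : ex_RInt f a b -> ex_RInt f b c -> RI f a b + RI f b c = RI f a c.
Proof. intros h1 h2. exact (RInt_Chasles (V:=R_CompleteNormedModule) f a b c h1 h2). Qed.

Lemma ball_R2 (l : R) (e : posreal) y : Rabs (y - l) < e -> ball l e y.
Proof. unfold ball; simpl; unfold AbsRing_ball, abs, minus, plus, opp; simpl. auto. Qed.

Lemma ex_gen (f : R -> R) K : (forall t, 0 < t -> continuous f t) ->
  (forall t, 0 < t -> 0 <= f t) -> (forall t, 0 < t -> f t <= K * exp (- t / 2)) ->
  ex_RInt_gen f (at_right 0) (Rbar_locally p_infty).
Proof.
  intros hc hp hb.
  set (G := fun y => RI f 1 y).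
  assert (chas : forall x y, 0 < x -> 0 < y -> RI f x y = G y - G x).
  { intros x y hx hy. unfold G. rewrite <- (Chas_R f 1 x y) by (apply exR; auto; lra). ring. }
  assert (mono : forall a b, 0 < a <= b -> G a <= G b).
  { intros a b [ha hab]. assert (0 <= RI f a b); [|rewrite chas in H; lra].
    apply RInt_ge_0; auto. apply exR; auto; lra. intros t ht; apply hp; lra. }
  set (E1 := fun z => exists y, 1 <= y /\ z = G y).
  set (E0 := fun z => exists x, 0 < x <= 1 /\ z = - G x).
  assert (G1 : G 1 = 0). { unfold G, RI. apply (RInt_point (V:=R_CompleteNormedModule)). }
  destruct (completeness E1) as [S HS].
  { exists (2 * K). intros z [y [hy ->]]. unfold G. apply int_bound; auto; lra. }
  { exists (G 1). exists 1. split; auto; lra. }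
  destruct (completeness E0) as [T HT].
  { exists (2 * K). intros z [x [hx ->]]. 
    assert (- G x = RI f x 1) by (rewrite chas; lra). rewrite H.
    apply int_bound; auto; lra. }
  { exists (- G 1). exists 1. split; auto; lra. }
  exists (S + T). apply (mk_gen f (fun ab => G (snd ab) - G (fst ab))).
  - eapply filter_imp; [| apply (FP_mk (fun x => 0 < x) (fun y => 0 < y) 1 0); intros; lra].
    intros [x y] [hx hy]; simpl in *. rewrite <- chas; auto. apply (RInt_correct (V:=R_CompleteNormedModule)). apply exR; auto.
  - intros P [eps HP]. unfold filtermap.
    assert (he : 0 < eps / 2) by (destruct eps; simpl; lra).
    destruct (lub_approx E1 S (eps/2) HS he) as [z1 [[y0 [hy0 ->]] hz1]].
    destruct (lub_approx E0 T (eps/2) HT he) as [z0 [[x0 [hx0 ->]] hz0]].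
    eapply filter_imp; [| apply (FP_mk (fun x => 0 < x < x0) (fun y => y0 < y) x0 y0); intros; lra].
    intros [x y] [hx hy]; simpl in *. apply HP. apply ball_R2.
    assert (G y <= S) by (apply HS; exists y; split; auto; lra).
    assert (- G x <= T) by (apply HT; exists x; split; auto; lra).
    assert (G y0 <= G y) by (apply mono; lra).
    assert (G x <= G x0) by (apply mono; lra).
    apply Rabs_def1; lra.
Qed.


Definition ph (c t : R) : R := Rpower t c * exp (- t).

Lemma ph_cont c t : 0 < t -> continuous (ph c) t.
Proof. intros ht. unfold ph, Rpower. apply cont_R. auto_derive. auto. Qed.

Lemma ph_pos c t : 0 < ph c t.
Proof. unfold ph, Rpower. apply Rmult_lt_0_compat; apply exp_pos. Qed.

Lemma ph_bound c t : 0 <= c -> 0 < t -> ph c t <= exp (c * (ln (2 * c + 1) - 1)) * exp (- t / 2).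
Proof.
  intros hc ht. unfold ph, Rpower. rewrite <- !exp_plus. apply exp_le_exp.
  set (j := 2 * c + 1). assert (hj : 0 < j) by (unfold j; lra).
  assert (h1 := ln_le_sub1 (t * / j) ltac:(apply Rmult_lt_0_compat; auto; apply Rinv_0_lt_compat; auto)).
  rewrite ln_mult, ln_Rinv in h1; auto; [|apply Rinv_0_lt_compat; auto].
  assert (hu : j * / j = 1) by (field; lra).
  assert (0 < / j) by (apply Rinv_0_lt_compat; auto).
  assert (c * (t * / j) <= t / 2).
  { assert (2 * c * / j <= 1) by (unfold j in *; nra). nra. }
  assert (c * ln t <= c * (ln j - 1) + c * (t * / j)) by nra.
  lra.
Qed.

Lemma ph_ex c : 0 <= c -> ex_RInt_gen (ph c) (at_right 0) (Rbar_locally p_infty).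
Proof.
  intros hc. apply (ex_gen _ (exp (c * (ln (2 * c + 1) - 1)))).
  - intros; apply ph_cont; auto.
  - intros; left; apply ph_pos.
  - intros; apply ph_bound; auto.
Qed.

Lemma Gamma_is x : 1 <= x -> is_RInt_gen (ph (x - 1)) (at_right 0) (Rbar_locally p_infty) (Gamma x).
Proof.
  intros hx.
  exact (RInt_gen_correct (V:=R_CompleteNormedModule) (Fa:=at_right 0) (Fb:=Rbar_locally p_infty) (ph (x-1)) (ph_ex (x-1) ltac:(lra))).
Qed.

Lemma gen_lower (f : R -> R) L p q : (forall t, 0 < t -> continuous f t) ->
  (forall t, 0 < t -> 0 <= f t) ->
  is_RInt_gen f (at_right 0) (Rbar_locally p_infty) L -> 0 < p <= q -> RI f p q <= L.
Proof.
  intros hc hp H [hp0 hpq]. apply (gen_ge f); auto.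
  eapply filter_imp; [| apply (FP_mk (fun x => 0 < x < p) (fun y => q < y) p q); intros; lra].
  intros [x y] [hx hy] I hI; simpl in *.
  assert (e : RI f x y = I) by exact (is_RInt_unique f x y I hI).
  rewrite <- e.
  rewrite <- (Chas_R f x p y), <- (Chas_R f p q y); try (apply exR; auto; lra).
  assert (0 <= RI f x p). { apply RInt_ge_0; try lra. apply exR; auto; lra. intros; apply hp; lra. }
  assert (0 <= RI f q y). { apply RInt_ge_0; try lra. apply exR; auto; lra. intros; apply hp; lra. }
  lra.
Qed.

Lemma Gamma_pos x : 1 <= x -> 0 < Gamma x.
Proof.
  intros hx. apply Rlt_le_trans with (RI (ph (x - 1)) 1 2).
  - apply RInt_gt_0; try lra. intros; apply ph_pos. intros; apply ph_cont; lra.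
  - apply gen_lower; try lra. intros; apply ph_cont; auto. intros; left; apply ph_pos.
    apply Gamma_is; auto.
Qed.

Lemma Gamma1 : Gamma 1 <= 1.
Proof.
  apply (gen_le (ph (1 - 1))). apply Gamma_is; lra.
  eapply filter_imp; [| apply (FP_mk (fun x => 0 < x) (fun y => 0 < y) 1 0); intros; lra].
  intros [x y] [hx hy] I hI; simpl in *.
  assert (H : is_RInt (ph (1 - 1)) x y (minus ((fun t => - exp (- t)) y) ((fun t => - exp (- t)) x))).
  { apply (is_RInt_derive (V:=R_CompleteNormedModule) (fun t => - exp (- t)) (ph (1 - 1))).
    - intros t _. auto_derive; auto. unfold ph, Rpower. replace (1 - 1) with 0 by ring.
      rewrite Rmult_0_l, exp_0. ring.
    - intros t ht. apply ph_cont. apply Rlt_le_trans with (2 := proj1 ht). apply Rmin_glb_lt; auto. }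
  assert (e1 : RI (ph (1 - 1)) x y = I) by exact (is_RInt_unique _ x y I hI).
  assert (e2 : RI (ph (1 - 1)) x y = - exp (- y) + - - exp (- x)) by exact (is_RInt_unique _ x y _ H).
  assert (exp (- x) <= 1) by (rewrite <- exp_0; apply exp_le_exp; lra).
  assert (0 < exp (- y)) by apply exp_pos.
  lra.
Qed.

Lemma Gamma_lower x M : 1 <= x -> 1 <= M -> Rpower M (x - 1) * exp (- (M + 1)) <= Gamma x.
Proof.
  intros hx hM. apply Rle_trans with (RI (ph (x - 1)) M (M + 1)).
  - apply Rle_trans with (RI (fun _ => Rpower M (x - 1) * exp (- (M + 1))) M (M + 1)).
    + unfold RI. rewrite RInt_const. unfold scal; simpl; unfold mult; simpl. lra.
    + apply RInt_le; try lra. apply ex_RInt_const. apply exR; try lra. intros; apply ph_cont; auto.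
      intros t ht. unfold ph. apply Rmult_le_compat.
      * unfold Rpower; left; apply exp_pos.
      * left; apply exp_pos.
      * apply Rle_Rpower_l; lra.
      * apply exp_le_exp; lra.
  - apply gen_lower; try lra. intros; apply ph_cont; auto. intros; left; apply ph_pos.
    apply Gamma_is; auto.
Qed.

Lemma Gamma_lc x : 1 <= x -> Gamma (x + 1 / 2) ^ 2 < Gamma x * Gamma (x + 1).
Proof.
  intros hx.
  assert (hA := Gamma_is x hx).
  assert (hB := Gamma_is (x + 1/2) ltac:(lra)).
  assert (hC := Gamma_is (x + 1) ltac:(lra)).
  assert (pB := Gamma_pos (x + 1/2) ltac:(lra)).
  assert (pC := Gamma_pos (x + 1) ltac:(lra)).
  set (A := Gamma x) in *. set (B := Gamma (x + 1/2)) in *. set (C := Gamma (x + 1)) in *.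
  set (s := B / C).
  assert (hs : 0 < s) by (apply Rdiv_lt_0_compat; auto).
  assert (hsC : s * C = B) by (unfold s; field; lra).
  set (psi := fun t => Rpower t (x - 1) * (1 - s * sqrt t) ^ 2 * exp (- t)).
  assert (H : is_RInt_gen psi (at_right 0) (Rbar_locally p_infty) (A - 2 * s * B + s ^ 2 * C)).
  { assert (H0 := is_RInt_gen_plus _ _ _ _ (is_RInt_gen_minus _ _ _ _ hA (is_RInt_gen_scal _ (2 * s) _ hB))
                   (is_RInt_gen_scal _ (s ^ 2) _ hC)).
    eapply is_RInt_gen_ext; [| exact H0].
    eapply filter_imp; [| apply (FP_mk (fun x => 0 < x) (fun y => 0 < y) 1 0); intros; lra].
    intros [a b] [ha hb] t ht; simpl in *.
    assert (htp : 0 < t) by (apply Rlt_trans with (2 := proj1 ht); apply Rmin_glb_lt; auto).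
    transitivity (ph (x - 1) t - 2 * s * ph (x + 1 / 2 - 1) t + s ^ 2 * ph (x + 1 - 1) t).
    { reflexivity. }
    unfold psi, ph.
    replace (x + 1 / 2 - 1) with ((x - 1) + / 2) by field.
    replace (x + 1 - 1) with ((x - 1) + 1) by ring.
    rewrite !Rpower_plus, Rpower_sqrt by auto.
    replace (Rpower t 1) with (sqrt t * sqrt t) by (rewrite Rpower_1, sqrt_sqrt; lra).
    ring. }
  assert (hs2 : 0 < s ^ 2) by (apply pow_lt; auto).
  set (p := / (4 * s ^ 2)). set (q := / (2 * s ^ 2)).
  assert (hp : 0 < p) by (unfold p; apply Rinv_0_lt_compat; lra).
  assert (hpq : p < q).
  { unfold p, q. apply Rinv_lt_contravar. apply Rmult_lt_0_compat; lra. lra. }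
  assert (hcont : forall t, 0 < t -> continuous psi t).
  { intros t ht. unfold psi, Rpower. apply cont_R. auto_derive. repeat split; auto. }
  assert (hpos : forall t, 0 < t -> t < q -> 0 < psi t).
  { intros t ht htq. unfold psi.
    assert (s ^ 2 * t < 1).
    { assert (s ^ 2 * q = / 2) by (unfold q; field; lra). 
      assert (0 < s ^ 2) by nra. nra. }
    assert (hr : sqrt t * sqrt t = t) by (apply sqrt_sqrt; lra).
    assert (0 <= sqrt t) by apply sqrt_pos.
    assert (s * sqrt t < 1) by nra.
    apply Rmult_lt_0_compat; [apply Rmult_lt_0_compat|apply exp_pos].
    unfold Rpower; apply exp_pos. apply pow_lt. lra. }
  assert (h1 : 0 < RI psi p q).
  { apply RInt_gt_0; auto. intros; apply hpos; lra. intros; apply hcont; lra. }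
  assert (h2 : RI psi p q <= A - 2 * s * B + s ^ 2 * C).
  { apply gen_lower; auto; try lra. intros t ht.
    unfold psi. apply Rmult_le_pos; [apply Rmult_le_pos|left; apply exp_pos].
    unfold Rpower; left; apply exp_pos. apply pow2_ge_0. }
  assert (h3 : 0 < A - s * B) by nra.
  assert (0 < (A - s * B) * C) by (apply Rmult_lt_0_compat; auto).
  replace ((A - s * B) * C) with (A * C - B * (s * C)) in H0 by ring.
  rewrite hsC in H0. simpl. lra.
Qed.


Lemma PI_bounds : 8/3 <= PI <= 52/15.
Proof.
  destruct (PI_ineq 0) as [h1 _]. destruct (PI_ineq 1) as [_ h2].
  simpl in h1, h2. unfold tg_alt, PI_tg in h1, h2. simpl in h1, h2. lra.
Qed.

Definition fO (n : nat) : R := ln (Omega n).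

Lemma Gamma_posn n : 0 < Gamma (INR n / 2 + 1).
Proof. apply Gamma_pos. assert (0 <= INR n) by apply pos_INR. lra. Qed.

Lemma Omega_pos n : 0 < Omega n.
Proof. unfold Omega, Rdiv. apply Rmult_lt_0_compat. unfold Rpower; apply exp_pos.
  apply Rinv_0_lt_compat, Gamma_posn. Qed.

Lemma fO_eq n : fO n = INR n / 2 * ln PI - ln (Gamma (INR n / 2 + 1)).
Proof.
  unfold fO, Omega, Rdiv at 1.
  assert (h1 := Gamma_posn n). assert (h2 : 0 < Rpower PI (INR n / 2)) by (unfold Rpower; apply exp_pos).
  assert (h3 := Rinv_0_lt_compat _ h1).
  rewrite ln_mult, ln_Rinv, ln_Rpower by assumption. ring.
Qed.

Lemma fO_concave n : fO n + fO (S (S n)) < 2 * fO (S n).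
Proof.
  rewrite !fO_eq.
  set (x := INR n / 2 + 1).
  assert (hx : 1 <= x) by (unfold x; assert (0 <= INR n) by apply pos_INR; lra).
  replace (INR (S n) / 2 + 1) with (x + 1 / 2) by (unfold x; rewrite S_INR; field).
  replace (INR (S (S n)) / 2 + 1) with (x + 1) by (unfold x; rewrite !S_INR; field).
  assert (h := Gamma_lc x hx).
  assert (pA := Gamma_pos x hx). assert (pB := Gamma_pos (x + 1/2) ltac:(lra)).
  assert (pC := Gamma_pos (x + 1) ltac:(lra)).
  apply ln_increasing in h; [| apply pow_lt; auto].
  rewrite ln_pow, ln_mult in h; auto. simpl in h.
  rewrite !S_INR. lra.
Qed.

Lemma fO_0 : 0 <= fO 0.
Proof.
  rewrite fO_eq. simpl. replace (0 / 2 + 1) with 1 by field.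
  assert (ln (Gamma 1) <= ln 1). { apply ln_le. apply Gamma_pos; lra. apply Gamma1. }
  rewrite ln_1 in H. lra.
Qed.

Lemma D_neg n : (1 <= n)%nat -> INR n * fO (S n) - INR (S n) * fO n < 0.
Proof.
  induction n as [|n IH]; intros hn. lia.
  assert (hc := fO_concave n).
  assert (h0 : INR n * fO (S n) - INR (S n) * fO n <= 0).
  { destruct n. simpl. assert (h := fO_0). lra. left; apply IH; lia. }
  rewrite !S_INR in *.
  assert (0 <= INR n) by apply pos_INR. nra.
Qed.

Lemma part2 n : (1 <= n)%nat -> Rpower (Omega (S n)) (/ INR (S n)) < Rpower (Omega n) (/ INR n).
Proof.
  intros hn. unfold Rpower. apply exp_increasing. fold (fO (S n)) (fO n).
  assert (h := D_neg n hn). rewrite S_INR in *.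
  assert (hX : 0 < INR n) by (apply lt_0_INR; lia).
  set (X := INR n) in *.
  apply Rmult_lt_reg_l with (X * (X + 1)); [nra|].
  replace (X * (X + 1) * (/ (X + 1) * fO (S n))) with (X * fO (S n)) by (field; lra).
  replace (X * (X + 1) * (/ X * fO n)) with ((X + 1) * fO n) by (field; lra).
  lra.
Qed.

Lemma part3 : is_lim_seq (fun n : nat => Rpower (Omega n) (/ INR n)) 0.
Proof.
  apply is_lim_seq_Reals. intros eps he.
  set (M := PI * exp (2 * Rabs (ln eps) + 2)).
  assert (hM : 1 <= M).
  { unfold M. assert (1 <= exp (2 * Rabs (ln eps) + 2)).
    { rewrite <- exp_0. apply exp_le_exp. generalize (Rabs_pos (ln eps)). lra. }
    assert (2 < PI) by (generalize PI_bounds; lra). nra. }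
  destruct (INR_unbounded (M + 1)) as [N hN].
  exists N. intros n hn. unfold R_dist. rewrite Rminus_0_r.
  assert (hnN : INR N <= INR n) by (apply le_INR; lia).
  assert (hX : 0 < INR n) by lra.
  set (X := INR n) in *.
  rewrite Rabs_pos_eq by (unfold Rpower; left; apply exp_pos).
  unfold Rpower. rewrite <- (exp_ln eps) by lra. apply exp_increasing. fold (fO n).
  assert (hf : fO n <= X / 2 * ln PI - (X / 2 * ln M - (M + 1))).
  { rewrite fO_eq. fold X. 
    assert (hl := Gamma_lower (X / 2 + 1) M ltac:(lra) hM).
    replace (X / 2 + 1 - 1) with (X / 2) in hl by ring.
    apply ln_le in hl; [| apply Rmult_lt_0_compat; [unfold Rpower; apply exp_pos| apply exp_pos]].
    rewrite ln_mult, ln_Rpower, ln_exp in hl; [| unfold Rpower; apply exp_pos| apply exp_pos].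
    lra. }
  assert (hlM : ln M = ln PI + (2 * Rabs (ln eps) + 2)).
  { unfold M. rewrite ln_mult, ln_exp; auto. apply PI_RGT_0. apply exp_pos. }
  rewrite hlM in hf.
  assert (hf2 : fO n <= - X * (Rabs (ln eps) + 1) + (M + 1)) by lra.
  assert (hr : (M + 1) / X < 1).
  { apply Rmult_lt_reg_r with X; auto. unfold Rdiv. rewrite Rmult_assoc, Rinv_l by lra. lra. }
  assert (/ X * fO n <= - (Rabs (ln eps) + 1) + (M + 1) / X).
  { apply Rmult_le_reg_l with X; auto. 
    replace (X * (/ X * fO n)) with (fO n) by (field; lra).
    replace (X * (- (Rabs (ln eps) + 1) + (M + 1) / X)) with (- X * (Rabs (ln eps) + 1) + (M + 1)) by (field; lra).
    lra. }
  assert (- Rabs (ln eps) <= ln eps) by (generalize (Rabs_le_between (ln eps)); intros; 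
    pose proof (Rle_abs (- ln eps)); rewrite Rabs_Ropp in *; lra).
  lra.
Qed.


Lemma exp_le_exp' (x y : R) : x <= y -> exp x <= exp y.
Proof. intros [h|h]. left; apply exp_increasing; auto. subst; lra. Qed.

Lemma ln_le_sub1' x : 0 < x -> ln x <= x - 1.
Proof. intros hx. generalize (exp_ineq1_le (ln x)). rewrite exp_ln; lra. Qed.

Lemma ln_le' x y : 0 < x -> x <= y -> ln x <= ln y.
Proof. intros hx [h|h]. left; apply ln_increasing; auto. subst; lra. Qed.

Lemma exp_sq a b : 0 <= b -> b <= exp a -> b * b <= exp (2 * a).
Proof. intros hb h. replace (2 * a) with (a + a) by ring. rewrite exp_plus.
  apply Rmult_le_compat; lra. Qed.

Lemma lnPI_le : ln PI <= 27/20.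
Proof.
  assert (h0 := exp_ineq1_le (27/320)).
  assert (h1 := exp_sq (27/320) (1 + 27/320) ltac:(lra) h0). replace (2 * (27/320)) with (27/160) in h1 by field.
  assert (h1' : 1175/1000 <= exp (27/160)) by lra.
  assert (h2 := exp_sq (27/160) (1175/1000) ltac:(lra) h1'). replace (2 * (27/160)) with (27/80) in h2 by field.
  assert (h2' : 138/100 <= exp (27/80)) by lra.
  assert (h3 := exp_sq (27/80) (138/100) ltac:(lra) h2'). replace (2 * (27/80)) with (27/40) in h3 by field.
  assert (h3' : 19/10 <= exp (27/40)) by lra.
  assert (h4 := exp_sq (27/40) (19/10) ltac:(lra) h3'). replace (2 * (27/40)) with (27/20) in h4 by field.
  rewrite <- (ln_exp (27/20)). apply ln_le'. apply PI_RGT_0. generalize PI_bounds; lra.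
Qed.

Lemma P1 u C A D B : 0 < u <= 1/2 -> 0 <= C -> 0 <= A <= 1/16 -> 0 <= D -> 0 <= B <= 1/256 ->
  2 * (1 + u) * (- C / 45 + 8 * A / 315 - 8 * D / 105 + B / 128) <= 1/200.
Proof. intros. nra. Qed.

Lemma P2 v C A D : 0 < v <= 1/3 -> 0 <= C <= 1/9 -> 0 <= A <= C / 9 -> 0 <= D <= 1/729 ->
  2 * (1 - v) * (C / 45 - 8 * A / 315 + 8 * D / 105) <= 1/190.
Proof. intros. nra. Qed.

Lemma ln_div' a b : 0 < a -> 0 < b -> ln (a / b) = ln a - ln b.
Proof. intros. unfold Rdiv. rewrite ln_mult, ln_Rinv; auto. apply Rinv_0_lt_compat; auto. Qed.

Lemma part1 n : (1 <= n)%nat -> alpha n - beta (S n) > 0.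
Proof.
  intros hn.
  assert (hx : 1 <= INR n) by (apply (le_INR 1); lia).
  set (x := INR n) in *.
  set (Lam := 1/(6*x^2) - 1/(45*x^4) + 8/(315*x^6) - 8/(105*x^8) + 1/(128*x^10)).
  set (Mu := 1/(6*(x+1)^2) - 1/(45*(x+1)^4) + 8/(315*(x+1)^6) - 8/(105*(x+1)^8)).
  assert (E : alpha n - beta (S n) = -(x+1)/(2*x) * ln (x/2) + 1/2*ln(PI*exp 1) - ln(2*PI)/(2*x) - Lam
     - (-(x+1+1)/(2*(x+1)) * ln((x+1)/2) + 1/2 * ln(PI*exp 1) - ln(2*PI)/(2*(x+1)) - Mu)).
  { unfold alpha, beta, lambda, mu. cbv zeta. rewrite S_INR. fold x. unfold Lam, Mu. ring. }
  rewrite E. clear E.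
  assert (hPI := PI_RGT_0).
  rewrite !ln_div', (ln_mult 2 PI) by lra.
  set (N := -(x+1)^2 * ln x + x*(x+2)*ln (x+1) - ln PI - 2*x*(x+1)*(Lam - Mu)).
  assert (E2 : -(x+1)/(2*x) * (ln x - ln 2) + 1/2*ln(PI*exp 1) - (ln 2 + ln PI)/(2*x) - Lam
     - (-(x+1+1)/(2*(x+1)) * (ln (x+1) - ln 2) + 1/2 * ln(PI*exp 1) - (ln 2 + ln PI)/(2*(x+1)) - Mu)
     = N / (2 * x * (x + 1))).
  { unfold N. field. lra. }
  rewrite E2. apply Rlt_gt, Rdiv_lt_0_compat; [| nra].
  set (u := / x). set (v := / (x + 1)).
  assert (RL : 2*x*(x+1)*Lam = 2*(1+u)*(1/6 - u^2/45 + 8*u^4/315 - 8*u^6/105 + u^8/128)).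
  { unfold Lam, u. field. lra. }
  assert (RM : 2*x*(x+1)*Mu = 2*(1-v)*(1/6 - v^2/45 + 8*v^4/315 - 8*v^6/105)).
  { unfold Mu, v. field. lra. }
  assert (hlp := lnPI_le).
  unfold N.
  replace (2 * x * (x + 1) * (Lam - Mu)) with (2*x*(x+1)*Lam - 2*x*(x+1)*Mu) by ring.
  rewrite RL, RM.
  destruct (Req_dec x 1) as [e1|ne1].
  -
    assert (eu : u = 1) by (unfold u; rewrite e1; apply Rinv_1).
    assert (ev : v = 1/2) by (unfold v; rewrite e1; field).
    rewrite eu, ev, e1. rewrite ln_1. replace (1 + 1) with 2 by ring.
    assert (h8 : ln (PI * / 8) <= PI * / 8 - 1) by (apply ln_le_sub1'; generalize PI_RGT_0; lra).
    rewrite ln_mult, ln_Rinv in h8 by (try apply Rinv_0_lt_compat; lra).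
    replace 8 with (2 ^ 3) in h8 by ring. rewrite ln_pow in h8 by lra. simpl INR in h8.
    generalize PI_bounds. intros. lra.
  - assert (hx2 : 2 <= x).
    { unfold x. assert (n <> 1%nat) by (intro; subst; apply ne1; unfold x; simpl; auto).
      apply (le_INR 2); lia. }
    assert (hu : 0 < u <= 1/2).
    { unfold u. split. apply Rinv_0_lt_compat; lra. apply Rmult_le_reg_l with x; [lra|].
      rewrite Rinv_r; lra. }
    assert (hv : 0 < v <= 1/3).
    { unfold v. split. apply Rinv_0_lt_compat; lra. apply Rmult_le_reg_l with (x+1); [lra|].
      rewrite Rinv_r; lra. }
    assert (hxv : (x + 1) * v = 1) by (unfold v; field; lra).
    assert (hLx : ln x <= x - 1) by (apply ln_le_sub1'; lra).
    assert (hd : ln x - ln (x + 1) <= x * v - 1).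
    { assert (h := ln_le_sub1' (x * v) ltac:(apply Rmult_lt_0_compat; lra)).
      unfold v in h |- *. rewrite ln_mult, ln_Rinv in h; try lra. apply Rinv_0_lt_compat; lra. }
    assert (hd2 : x * (x + 2) * (ln (x + 1) - ln x) >= x * (x + 2) * (1 - x * v)).
    { apply Rmult_ge_compat_l; nra. }
    assert (e3 : x * (x + 2) * (1 - x * v) = (x + 1) - v).
    { unfold v. field. lra. }
    assert (u2 : 0 <= u ^ 2) by (apply pow_le; lra).
    assert (u6 : 0 <= u ^ 6) by (apply pow_le; lra).
    assert (u4 : 0 <= u ^ 4 <= 1/16).
    { split. apply pow_le; lra. apply Rle_trans with ((1/2)^4). apply pow_incr; lra. simpl; lra. }
    assert (u8 : 0 <= u ^ 8 <= 1/256).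
    { split. apply pow_le; lra. apply Rle_trans with ((1/2)^8). apply pow_incr; lra. simpl; lra. }
    assert (v2 : 0 <= v ^ 2 <= 1/9).
    { split. apply pow_le; lra. apply Rle_trans with ((1/3)^2). apply pow_incr; lra. simpl; lra. }
    assert (v4 : 0 <= v ^ 4 <= v ^ 2 / 9).
    { split. apply pow_le; lra. replace (v ^ 4) with (v ^ 2 * v ^ 2) by ring. nra. }
    assert (v6 : 0 <= v ^ 6 <= 1/729).
    { split. apply pow_le; lra. apply Rle_trans with ((1/3)^6). apply pow_incr; lra. simpl; lra. }
    assert (hp1 := P1 u (u^2) (u^4) (u^6) (u^8) hu u2 u4 u6 u8).
    assert (hp2 := P2 v (v^2) (v^4) (v^6) hv v2 v4 v6).
    lra.
Qed.

Theorem theorem2 :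
  (forall n : nat, (1 <= n)%nat -> alpha n - beta (S n) > 0) /\
  (forall n : nat, (1 <= n)%nat ->
     Rpower (Omega (S n)) (/ INR (S n)) < Rpower (Omega n) (/ INR n)) /\
  is_lim_seq (fun n : nat => Rpower (Omega n) (/ INR n)) 0.
Proof.
  split; [exact part1|]. split; [exact part2|]. exact part3.
Qed.
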